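(* Let $G=(V,E)$ be an undirected graph without isolated vertices, let $v\in V$, and let $G_v$ be the subgraph of $G$ induced by the set of neighbors of $v$ (not including $v$). Then $\nu_v$ equals the fractional clique number of $G_v$ (equivalently, the fractional chromatic number of $G_v$).
   Context: Vertex Cover set system of $G$: agents are the vertices, feasible sets are the vertex covers of $G$. For a cost vector $c$ and $y(X)=\sum_{u\in X}y_u$: let $S$ be a vertex cover minimizing $c(S)$ (ties broken lexicographically); $\nu(c)$ is the maximum of $x(S)$ over $x\in\mathbb R^V$ subject to $x_u\ge c_u$ for all $u$, $x_u=c_u$ for $u\notin S$, and $x(S)\le x(T)$ for every vertex cover $T$. $\nu_v=\nu(\mathbf 1_v)$, where $\mathbf 1_v$ has $1$ at $v$ and $0$ elsewhere. The fractional clique number of a graph $H$ is the maximum of $\sum_u x_u$ subject to $x_u\ge 0$ and $\sum_{u\in I}x_u\le1$ for every independent set $I$ of $H$. *)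

(* Defs.v *)
From HB Require Import structures.
From mathcomp Require Import all_boot all_order all_algebra.
Set Implicit Arguments. Unset Strict Implicit. Unset Printing Implicit Defensive.
Import Order.TTheory GRing.Theory Num.Theory.
Local Open Scope ring_scope.

Definition simple_graph (V : finType) (e : rel V) : Prop :=
  symmetric e /\ irreflexive e.

Definition no_isolated (V : finType) (e : rel V) : Prop :=
  forall u : V, exists w : V, e u w.

Definition vertex_cover (V : finType) (e : rel V) (S : {set V}) : bool :=
  [forall u, forall w, e u w ==> (u \in S) || (w \in S)].

Definition independent (V : finType) (e : rel V) (I : {set V}) : bool :=
  [forall u in I, forall w in I, ~~ e u w].

Definition wt (R : realFieldType) (V : finType) (y : V -> R) (X : {set V}) : R :=
  \sum_(u in X) y u.

Fixpoint lexle (s t : seq bool) : bool :=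
  match s, t with
  | [::], _ => true
  | _ :: _, [::] => false
  | a :: s', b :: t' => (~~ a && b) || ((a == b) && lexle s' t')
  end.

Definition charvec (V : finType) (S : {set V}) : seq bool :=
  [seq u \in S | u <- enum V].

Definition min_cost_cover (R : realFieldType) (V : finType) (e : rel V)
    (c : V -> R) (S : {set V}) : bool :=
  vertex_cover e S && [forall T : {set V}, vertex_cover e T ==> (wt c S <= wt c T)].

Definition chosen_cover (R : realFieldType) (V : finType) (e : rel V)
    (c : V -> R) : {set V} :=
  extremum lexle setT (fun S => min_cost_cover e c S) (fun S => charvec S).

Definition nu_feasible (R : realFieldType) (V : finType) (e : rel V)
    (c : V -> R) (x : V -> R) : Prop :=
  let S := chosen_cover e c in
  (forall u, c u <= x u) /\
  (forall u, u \notin S -> x u = c u) /\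
  (forall T : {set V}, vertex_cover e T -> wt x S <= wt x T).

Definition is_nu (R : realFieldType) (V : finType) (e : rel V)
    (c : V -> R) (r : R) : Prop :=
  (exists x, nu_feasible e c x /\ wt x (chosen_cover e c) = r) /\
  (forall x, nu_feasible e c x -> wt x (chosen_cover e c) <= r).

Definition unit_cost (R : realFieldType) (V : finType) (v : V) : V -> R :=
  fun u => if u == v then 1 else 0.

Definition fclique_feasible (R : realFieldType) (T : finType) (h : rel T)
    (x : T -> R) : Prop :=
  (forall u, 0 <= x u) /\
  (forall I : {set T}, independent h I -> wt x I <= 1).

Definition is_fclique_number (R : realFieldType) (T : finType) (h : rel T)
    (r : R) : Prop :=
  (exists x, fclique_feasible h x /\ \sum_u x u = r) /\
  (forall x, fclique_feasible h x -> \sum_u x u <= r).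

(* G_v: subgraph induced by the neighbours of v (v excluded, by irreflexivity) *)
Definition nbhd_type (V : finType) (e : rel V) (v : V) : finType :=
  {u : V | e v u}.

Definition nbhd_rel (V : finType) (e : rel V) (v : V) : rel (nbhd_type e v) :=
  fun a b => e (val a) (val b).
Arguments nbhd_rel {V} e v.
Arguments nbhd_type {V} e v.

(* Main.v *)
Require Import Defs.
From HB Require Import structures.
From mathcomp Require Import all_boot all_order all_algebra.
Import Order.TTheory GRing.Theory Num.Theory.
Local Open Scope ring_scope.

Module Helpers.
Set Implicit Arguments. Unset Strict Implicit. Unset Printing Implicit Defensive.

Section LP.
Variable R : realFieldType.
Definition cstr := (seq R * R)%type.
Definition S_ n (x : nat -> R) (c : cstr) : R := \sum_(i < n) c.1`_i * x i.
Definition sat n (x : nat -> R) (c : cstr) : bool := S_ n x c <= c.2.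
Definition satA n x (s : seq cstr) := all (sat n x) s.
Definition upd n (x : nat -> R) (t : R) : nat -> R := fun i => if i == n then t else x i.
Definition bnd n x (c : cstr) : R := (c.2 - S_ n x c) / c.1`_n.

Lemma S_upd n x t c : S_ n.+1 (upd n x t) c = S_ n x c + c.1`_n * t.
Proof.
rewrite /S_ big_ord_recr /= /upd eqxx; congr (_ + _).
by apply: eq_bigr => i _ /=; rewrite ltn_eqF.
Qed.

Lemma S_ext n x y c : (forall i, (i < n)%N -> x i = y i) -> S_ n x c = S_ n y c.
Proof. by move=> h; apply: eq_bigr => i _; rewrite h. Qed.

Lemma sat_upd_pos n x t c : 0 < c.1`_n -> sat n.+1 (upd n x t) c = (t <= bnd n x c).
Proof.
move=> h; by rewrite /sat S_upd /bnd ler_pdivlMr // lerBrDl (mulrC t).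
Qed.

Lemma sat_upd_neg n x t c : c.1`_n < 0 -> sat n.+1 (upd n x t) c = (bnd n x c <= t).
Proof.
move=> h; by rewrite /sat S_upd /bnd ler_ndivrMr // lerBrDl (mulrC t).
Qed.

Lemma sat_upd_0 n x t c : c.1`_n = 0 -> sat n.+1 (upd n x t) c = sat n x c.
Proof. by move=> h; rewrite /sat S_upd h mul0r addr0. Qed.

Lemma upd_self n x : forall i, upd n x (x n) i = x i.
Proof. by move=> i; rewrite /upd; case: eqP => // ->. Qed.

Lemma sat_self n x c : sat n.+1 x c = sat n.+1 (upd n x (x n)) c.
Proof. by rewrite /sat (S_ext (y := upd n x (x n))) // => i _; rewrite upd_self. Qed.

Definition comb n (p q : cstr) : cstr :=
  (mkseq (fun i => - q.1`_n * p.1`_i + p.1`_n * q.1`_i) n,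
   - q.1`_n * p.2 + p.1`_n * q.2).

Definition elim n (s : seq cstr) : seq cstr :=
  [seq c <- s | c.1`_n == 0] ++
  [seq comb n p q | p <- [seq c <- s | 0 < c.1`_n], q <- [seq c <- s | c.1`_n < 0]].

Lemma S_comb n x p q :
  S_ n x (comb n p q) = - q.1`_n * S_ n x p + p.1`_n * S_ n x q.
Proof.
rewrite /S_ !mulr_sumr -big_split /=; apply: eq_bigr => i _.
by rewrite nth_mkseq // mulrDl !mulrA.
Qed.

Lemma elim_sound n x s : satA n.+1 x s -> satA n x (elim n s).
Proof.
move=> /allP H; apply/allP => c; rewrite mem_cat => /orP[].
  rewrite mem_filter => /andP[/eqP z cs]; have := H c cs.
  by rewrite sat_self sat_upd_0.
case/allpairsP => [[p q] [/= pP qN ->]].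
move: pP qN; rewrite !mem_filter => /andP[pp ps] /andP[qn qs].
have := H p ps; rewrite sat_self /sat S_upd => hp.
have := H q qs; rewrite sat_self /sat S_upd => hq.
rewrite /sat S_comb /=.
have nq : 0 <= - q.1`_n by rewrite oppr_ge0 ltW.
have := lerD (ler_wpM2l nq hp) (ler_wpM2l (ltW pp) hq).
rewrite !mulrDr addrACA.
have -> : - q.1`_n * (p.1`_n * x n) + p.1`_n * (q.1`_n * x n) = 0.
  by rewrite mulNr !mulrA (mulrC (q.1`_n)) addNr.
by rewrite addr0.
Qed.

Lemma argmin (T : eqType) (s : seq T) (f : T -> R) : s != [::] ->
  exists2 p, p \in s & forall q, q \in s -> f p <= f q.
Proof.
elim: s => // a s IH _; case: (eqVneq s [::]) => [->|ne].
  by exists a; rewrite ?mem_seq1 // => q; rewrite mem_seq1 => /eqP ->.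
have [p ps hp] := IH ne.
case: (lerP (f a) (f p)) => h.
  exists a; first by rewrite mem_head.
  move=> q; rewrite in_cons => /orP[/eqP ->//|/hp]; exact: le_trans.
exists p; first by rewrite in_cons ps orbT.
move=> q; rewrite in_cons => /orP[/eqP ->|/hp //]; exact: ltW.
Qed.

Lemma comb_bnd n x p q : 0 < p.1`_n -> q.1`_n < 0 -> sat n x (comb n p q) ->
  bnd n x q <= bnd n x p.
Proof.
move=> pp qn; rewrite /sat S_comb /= /bnd => h.
rewrite ler_pdivlMr // mulrAC ler_ndivrMr // !mulrBl.
rewrite (mulrC q.2) (mulrC (S_ n x q)) (mulrC p.2) (mulrC (S_ n x p)).
rewrite lerBrDr -addrA (addrC (q.1`_n * p.2)) -lerBrDl.
move: h; rewrite !mulNr => h; rewrite lerBrDr.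
by move: h; rewrite -(lerD2l (q.1`_n * p.2)) addNKr.
Qed.

Lemma elim_complete n x s : satA n x (elim n s) -> exists t, satA n.+1 (upd n x t) s.
Proof.
move=> /allP H.
set P := [seq c <- s | 0 < c.1`_n]; set N := [seq c <- s | c.1`_n < 0].
have key : forall t, (forall p, p \in P -> t <= bnd n x p) ->
    (forall q, q \in N -> bnd n x q <= t) -> satA n.+1 (upd n x t) s.
  move=> t hP hN; apply/allP => c cs; case: (ltgtP (c.1`_n) 0) => hc.
  - by rewrite sat_upd_neg //; apply: hN; rewrite mem_filter hc cs.
  - by rewrite sat_upd_pos //; apply: hP; rewrite mem_filter hc cs.
  - by rewrite sat_upd_0 //; apply: H; rewrite mem_cat mem_filter hc eqxx cs.
have lohi : forall p q, p \in P -> q \in N -> bnd n x q <= bnd n x p.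
  move=> p q pP qN; have := pP; have := qN; rewrite !mem_filter => /andP[qn _] /andP[pp _].
  apply: comb_bnd => //; apply: H; rewrite mem_cat; apply/orP; right.
  by apply/allpairsP; exists (p, q).
case: (eqVneq P [::]) => [P0|Pn].
  case: (eqVneq N [::]) => [N0|Nn].
    by exists 0; apply: key => [p|q]; rewrite ?P0 ?N0.
  have [q qN hq] := argmin (fun c => - bnd n x c) Nn.
  exists (bnd n x q); apply: key => [p|q' q'N]; first by rewrite P0.
  by have := hq q' q'N; rewrite lerN2.
have [p pP hp] := argmin (bnd n x) Pn.
exists (bnd n x p); apply: key => [p' p'P|q qN]; first exact: hp.
exact: lohi.
Qed.

Lemma lp_max n (s : seq cstr) : (exists x, satA n.+1 x s) ->
  (exists M, forall x, satA n.+1 x s -> x 0%N <= M) ->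
  exists x, satA n.+1 x s /\ forall y, satA n.+1 y s -> y 0%N <= x 0%N.
Proof.
elim: n s => [|n IH] s [x0 hx0] [M hM].
  have e0 : forall y c, bnd 0 y c = bnd 0 x0 c by move=> y c; rewrite /bnd /S_ !big_ord0.
  have char : forall y, satA 1 y s -> forall c, c \in s -> 0 < c.1`_0 -> y 0%N <= bnd 0 x0 c.
    by move=> y /allP hy c cs cp; have := hy c cs; rewrite sat_self sat_upd_pos // e0.
  have charN : forall y, satA 1 y s -> forall c, c \in s -> c.1`_0 < 0 -> bnd 0 x0 c <= y 0%N.
    by move=> y /allP hy c cs cp; have := hy c cs; rewrite sat_self sat_upd_neg // e0.
  have feas : forall t, x0 0%N <= t -> (forall c, c \in s -> 0 < c.1`_0 -> t <= bnd 0 x0 c) ->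
      satA 1 (upd 0 x0 t) s.
    move=> t ht hp; apply/allP => c cs; case: (ltgtP (c.1`_0) 0) => hc.
    - by rewrite sat_upd_neg //; exact: le_trans (charN x0 hx0 c cs hc) ht.
    - by rewrite sat_upd_pos //; exact: hp.
    - by rewrite sat_upd_0 //; have := allP hx0 c cs; rewrite sat_self sat_upd_0.
  set P := [seq c <- s | 0 < c.1`_0].
  case: (eqVneq P [::]) => [P0|Pn].
    have h1 : x0 0%N <= M + 1 by apply: le_trans (hM _ hx0) _; rewrite lerDl ler01.
    have := hM _ (feas _ h1 _).
    rewrite /upd eqxx => h.
    have h2 : M + 1 <= M.
      apply: h => c cs cp; have : c \in P by rewrite mem_filter cp cs.
      by rewrite P0.
    by move: h2; rewrite gerDl ler10.
  have [p pP hp] := argmin (bnd 0 x0) Pn.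
  move: (pP); rewrite mem_filter => /andP[pp ps].
  exists (upd 0 x0 (bnd 0 x0 p)); split.
    apply: feas; first exact: char x0 hx0 p ps pp.
    by move=> c cs cp; apply: hp; rewrite mem_filter cp cs.
  by move=> y hy; rewrite /upd eqxx; exact: char y hy p ps pp.
have [||x' [hx' hmax]] := IH (elim n.+1 s).
- by exists x0; apply: elim_sound.
- exists M => x' hx'; have [t ht] := elim_complete hx'; have := hM _ ht; by rewrite /upd.
- have [t ht] := elim_complete hx'; exists (upd n.+1 x' t); split => // y hy.
  rewrite /upd /=; apply: hmax; exact: elim_sound.
Qed.
End LP.

Section FC.
Variables (R : realFieldType) (T : finType) (h : rel T).
Hypothesis hirr : irreflexive h.
Local Notation m := #|T|.
Definition pid (u : T) : nat := (enum_rank u).+1.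
Definition cf (w : T -> R) (a0 : R) (i : nat) : R :=
  (if i == 0%N then a0 else 0) + \sum_(u | pid u == i) w u.
Definition row (w : T -> R) (a0 b : R) : cstr R := (mkseq (cf w a0) m.+1, b).

Lemma S_row x w a0 b : S_ m.+1 x (row w a0 b) = a0 * x 0%N + \sum_u w u * x (pid u).
Proof.
rewrite /S_ /=.
under eq_bigr => i _ do rewrite nth_mkseq // /cf mulrDl.
rewrite big_split /=; congr (_ + _).
  rewrite big_ord_recl /= big1 ?addr0 // => i _.
  by rewrite /bump /= mul0r.
rewrite [RHS](partition_big (fun u => lift ord0 (enum_rank u)) predT) //=.

apply: eq_bigr => j _; rewrite mulr_suml; apply: eq_big => u.
  rewrite /pid; apply/eqP/eqP => [e|<-]. exact: val_inj. by [].
by move/eqP => <-.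
Qed.

Lemma sum_if (P : pred T) (a : R) (f : T -> R) :
  \sum_w (if P w then a else 0) * f w = a * \sum_(w | P w) f w.
Proof.
rewrite mulr_sumr [RHS]big_mkcond /=; apply: eq_bigr => w _.
by case: (P w); rewrite ?mul0r ?mulr0.
Qed.

Definition sys : seq (cstr R) :=
  [:: row (fun _ => -1) 1 0; row (fun _ => 1) (-1) 0] ++
  ([seq row (fun w => if w == u then -1 else 0) 0 0 | u <- enum T] ++
  [seq row (fun w => if w \in J then 1 else 0) 0 1 | J : {set T} <- enum [pred J : {set T} | independent h J]]).

Lemma sys_sound x : satA m.+1 x sys ->
  fclique_feasible h (fun u => x (pid u)) /\ \sum_u x (pid u) = x 0%N.
Proof.
move=> /allP H.
have Hc c : c \in sys -> S_ m.+1 x c <= c.2 by move/H.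
split; first split.
- move=> u; have := Hc (row (fun w => if w == u then -1 else 0) 0 0).
  rewrite S_row mul0r add0r sum_if big_pred1_eq mulN1r oppr_le0; apply.
  by rewrite !mem_cat; apply/orP; right; apply/orP; left; apply/mapP; exists u; rewrite ?mem_enum.
- move=> I hI; have := Hc (row (fun w => if w \in I then 1 else 0) 0 1).
  rewrite S_row mul0r add0r sum_if mul1r; apply.
  by rewrite !mem_cat; apply/orP; right; apply/orP; right; apply/mapP; exists I; rewrite ?mem_enum.
have h1 := Hc (row (fun _ => -1) 1 0); have h2 := Hc (row (fun _ => 1) (-1) 0).
move: h1 h2; rewrite !mem_cat !in_cons !eqxx ?orbT /= !S_row.
move=> /(_ isT) h1 /(_ isT) h2.
move: h1 h2; rewrite -!mulr_sumr !mul1r !mulN1r subr_le0 addrC subr_le0 => h1 h2.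
by apply/eqP; rewrite eq_le h1 h2.
Qed.

Definition ext (y : T -> R) (i : nat) : R :=
  if i == 0%N then \sum_u y u else \sum_(u | pid u == i) y u.

Lemma ext_pid y u : ext y (pid u) = y u.
Proof.
rewrite /ext /=; rewrite (eq_bigl (pred1 u)) ?big_pred1_eq // => w.
by rewrite /pid /= eqSS; apply/eqP/eqP => [/val_inj/enum_rank_inj|->].
Qed.

Lemma sys_complete y : fclique_feasible h y -> satA m.+1 (ext y) sys.
Proof.
move=> [hnn hI]; apply/allP => c; rewrite !mem_cat !in_cons in_nil orbF.
rewrite /sat; case/orP => [/orP[]/eqP->|/orP[]/mapP[z]]; rewrite ?S_row.
- under eq_bigr do rewrite ext_pid mulN1r.
  by rewrite sumrN mul1r /ext /= subrr.
- under eq_bigr do rewrite ext_pid mul1r.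
  by rewrite mulN1r /ext /= addNr.
- move=> _ ->; rewrite S_row mul0r add0r.
  under eq_bigr do rewrite ext_pid.
  by rewrite sum_if big_pred1_eq mulN1r oppr_le0.
- rewrite mem_enum => hz ->; rewrite S_row mul0r add0r.
  under eq_bigr do rewrite ext_pid.
  by rewrite sum_if mul1r; apply: hI.
Qed.

Lemma indep1 u : independent h [set u].
Proof.
apply/forallP => a; apply/implyP; rewrite in_set1 => /eqP ->.
apply/forallP => b; apply/implyP; rewrite in_set1 => /eqP ->.
by rewrite hirr.
Qed.

Lemma fclique_exists : exists r : R, is_fclique_number h r.
Proof.
have [||x [hx hmax]] := @lp_max R m sys.
- exists (ext (fun _ => 0)); apply: sys_complete; split => [u|I _]; rewrite /wt ?big1 ?ler01 //.
- exists (\sum_(u : T) (1 : R)) => x hx; have [[hnn hI] <-] := sys_sound hx.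
  apply: ler_sum => u _; have := hI _ (indep1 u); by rewrite /wt big_set1.
- exists (x 0%N); split.
    by exists (fun u => x (pid u)); have [f e] := sys_sound hx; split.
  by move=> y hy; have := hmax _ (sys_complete hy); rewrite /ext eqxx.
Qed.
End FC.

Lemma lexle_refl s : lexle s s.
Proof. by elim: s => //= a s ->; rewrite eqxx orbT. Qed.

Lemma lexle_total s t : lexle s t || lexle t s.
Proof.
elim: s t => [|a s IH] [|b t] //=; case: a; case: b => //=; exact: IH.
Qed.

Lemma lexle_trans s t u : lexle s t -> lexle t u -> lexle s u.
Proof.
elim: s t u => [|a s IH] [|b t] [|c u] //=; case: a; case: b; case: c => //=; exact: IH.
Qed.

Section Main.
Variables (R : realFieldType) (V : finType) (e : rel V) (v : V).
Hypothesis sg : simple_graph e.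
Local Notation c := (unit_cost R v).
Local Notation S := (chosen_cover e c).

Lemma esym a b : e a b = e b a.
Proof. by case: sg => s _; apply: s. Qed.
Lemma eirr a : e a a = false.
Proof. by case: sg => _ i; apply: i. Qed.

Lemma wt_c X : wt c X = if v \in X then 1 else 0.
Proof.
rewrite /wt /unit_cost; case: (boolP (v \in X)) => hv.
  rewrite (bigD1 v) //= eqxx big1 ?addr0 // => u /andP[_ /negbTE ->] //.
rewrite big1 // => u uX; case: eqP => // eu; by rewrite -eu uX in hv.
Qed.

Lemma S0_min : min_cost_cover e c (~: [set v]).
Proof.
apply/andP; split.
  apply/forallP => a; apply/forallP => b; apply/implyP => eab.
  rewrite !in_setC !in_set1 -negb_and; apply/negP => /andP[/eqP ea /eqP eb].
  by rewrite ea eb eirr in eab.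
apply/forallP => X; apply/implyP => _; rewrite wt_c in_setC in_set1 eqxx /= wt_c.
by case: ifP.
Qed.

Lemma S_min : min_cost_cover e c S.
Proof.
pose P := fun X : {set V} => min_cost_cover e c X.
have := @extremum_inP _ _ lexle (~: [set v]) P (fun X => charvec X)
  (fun _ _ => lexle_refl _) (fun y x z _ _ _ => @lexle_trans _ _ _) (fun x y _ _ => lexle_total _ _) S0_min.
have sp : forall X, extremum_spec lexle P (fun X => charvec X) X ->
    P X /\ (forall j, P j -> lexle (charvec X) (charvec j)) by move=> X [].
move/sp; rewrite /chosen_cover /extremum; case: pickP => [i /andP[Pi _] _ | none] //=.
move=> [P0 m0]; have := none (~: [set v]); rewrite /= P0 /=.
by move/negbT/negP; case; apply/forall_inP.
Qed.


Lemma cover_edge X a b : vertex_cover e X -> e a b -> (a \in X) || (b \in X).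
Proof. by move=> /forallP/(_ a)/forallP/(_ b)/implyP; apply. Qed.

Lemma S_cover : vertex_cover e S.
Proof. by case/andP: S_min. Qed.

Lemma vS : v \notin S.
Proof.
case/andP: S_min => _ /forallP/(_ (~: [set v]))/implyP.
case/andP: S0_min => -> _ /(_ isT); rewrite !wt_c in_setC in_set1 eqxx /=.
by case: (v \in S) => //; rewrite ler10.
Qed.

Lemma NS u : e v u -> u \in S.
Proof. by move=> evu; have := cover_edge S_cover evu; rewrite (negbTE vS). Qed.

Lemma neq_v u : e v u -> u != v.
Proof. by move=> evu; apply/eqP => uv; rewrite uv eirr in evu. Qed.

Lemma c0 u : u != v -> c u = 0.
Proof. by rewrite /unit_cost => /negbTE ->. Qed.

Lemma sum_nbP (P : pred V) (F : V -> R) :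
  \sum_(u | e v u && P u) F u = \sum_(w : nbhd_type e v | P (val w)) F (val w).
Proof.
rewrite (reindex_omap (val : nbhd_type e v -> V) insub); last first.
  by move=> i /andP[ei _]; rewrite insubT.
apply: eq_bigl => w; rewrite valK eqxx (valP w) andbT //.
Qed.

Lemma sum_nb (F : V -> R) :
  \sum_(u | e v u) F u = \sum_(w : nbhd_type e v) F (val w).
Proof.
rewrite -(sum_nbP predT); apply: eq_bigl => u; by rewrite andbT.
Qed.


Lemma nu_upper x : nu_feasible e c x ->
  fclique_feasible (nbhd_rel e v) (fun w => x (val w)) /\
  wt x S = \sum_(w : nbhd_type e v) x (val w).
Proof.
move=> [hge [hout hcov]].
have xnn u : u != v -> 0 <= x u by move=> uv; rewrite -(c0 uv) hge.
have xout u : u \notin S -> u != v -> x u = 0 by move=> uS uv; rewrite hout // c0.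
have wt_split X : \sum_u x u = wt x X + wt x (~: X).
  rewrite /wt (bigID (fun u => u \in X)) /=; congr (_ + _); apply: eq_bigl => u //.
  by rewrite in_setC.
have wtcS : wt x (~: S) = 1.
  rewrite /wt (eq_bigr c); last by move=> u; rewrite in_setC => /hout.
  by have := wt_c (~: S); rewrite /wt => ->; rewrite in_setC vS.
have zero u : u \in S -> ~~ e v u -> x u = 0.
  move=> uS nvu; have uv : u != v by apply/eqP => uv; move: uS; rewrite uv (negbTE vS).
  apply/eqP; rewrite eq_le xnn // andbT.
  pose S' := (S :\ u) :|: [set w | e u w].
  have cS' : vertex_cover e S'.
    apply/forallP => a; apply/forallP => b; apply/implyP => eab.
    rewrite !inE; case/orP: (cover_edge S_cover eab) => [aS|bS].
      case: (eqVneq a u) => [au|nau]; last by rewrite aS.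
      by rewrite -au eab !orbT.
    case: (eqVneq b u) => [bu|nbu]; last by rewrite bS !orbT.
    by rewrite -bu (esym b a) eab !orbT.
  have := hcov S' cS'.
  have -> : wt x S = x u + \sum_(w in S | w != u) x w by rewrite /wt (bigD1 u).
  have -> : wt x S' = \sum_(w in S | w != u) x w.
    rewrite /wt (bigID (fun w => w \in S)) /= [X in _ + X]big1 ?addr0.
      apply: eq_bigl => w; rewrite !inE; case: (eqVneq w u) => [->|] /=.
        by rewrite eirr uS.
      by case: (w \in S) => //=; rewrite andbF.
    move=> w; rewrite !inE => /andP[/orP[/andP[_ wS]|euw] nwS]; first by rewrite wS in nwS.
    apply: xout => //; apply/eqP => wv; by rewrite wv esym (negbTE nvu) in euw.
  by rewrite gerDr.
split; first split.
- by move=> w; apply: xnn; apply: neq_v; apply: (valP w).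
- move=> J hJ.
  pose K := [set val w | w in J].
  have cK : vertex_cover e (~: K).
    apply/forallP => a; apply/forallP => b; apply/implyP => eab.
    rewrite !in_setC -negb_and; apply/negP => /andP[/imsetP[w1 w1J ea] /imsetP[w2 w2J eb]].
    move: hJ => /forallP/(_ w1)/implyP/(_ w1J)/forallP/(_ w2)/implyP/(_ w2J).
    by rewrite /nbhd_rel -ea -eb eab.
  have eK : wt x K = wt (fun w => x (val w)) J.
    by rewrite /wt big_imset //; move=> a b _ _; apply: val_inj.
  rewrite -eK.
  have e1 := wt_split S; have e2 := wt_split K.
  have h := hcov _ cK.
  rewrite wtcS in e1.
  by rewrite -(lerD2r (wt x (~: K))) -e2 e1 addrC lerD2l.
have -> : wt x S = \sum_(u | e v u) x u.
  rewrite /wt (bigID (e v)) /= [X in _ + X]big1 ?addr0.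
    by apply: eq_bigl => u; case evu: (e v u); rewrite ?andbF ?andbT ?NS.
  by move=> u /andP[uS nvu]; apply: zero.
by rewrite sum_nb.
Qed.


Definition yv (y : nbhd_type e v -> R) (u : V) : R :=
  if (insub u : option (nbhd_type e v)) is Some w then y w else 0.

Lemma yv_val y w : yv y (val w) = y w.
Proof. by rewrite /yv valK. Qed.

Lemma yv_out y u : ~~ e v u -> yv y u = 0.
Proof. by move=> h; rewrite /yv insubF //; apply: negbTE. Qed.

Lemma sum_yv y (X : {set V}) : \sum_(u in X) yv y u = \sum_(w : nbhd_type e v | val w \in X) y w.
Proof.
rewrite (bigID (e v)) /= [X in _ + X]big1 ?addr0; last by move=> u /andP[_ /yv_out].
rewrite (eq_bigl (fun u => e v u && (u \in X))); last by move=> u; rewrite andbC.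
by rewrite sum_nbP; apply: eq_bigr => w _; rewrite yv_val.
Qed.

Lemma nu_lower y : fclique_feasible (nbhd_rel e v) y ->
  exists x, nu_feasible e c x /\ wt x S = \sum_(w : nbhd_type e v) y w.
Proof.
move=> [ynn yI].
have yvnn u : 0 <= yv y u by rewrite /yv; case: insubP.
pose x u := c u + yv y u.
have wt_x X : wt x X = (if v \in X then 1 else 0) + \sum_(w : nbhd_type e v | val w \in X) y w.
  by rewrite /wt big_split /= -sum_yv; have := wt_c X; rewrite /wt => ->.
have wS : wt x S = \sum_(w : nbhd_type e v) y w.
  rewrite wt_x (negbTE vS) add0r; apply: eq_bigl => w; exact: NS (valP w).
exists x; split => //; split; [|split].
- by move=> u; rewrite /x lerDl.
- move=> u uS; rewrite /x yv_out ?addr0 //; apply: contra uS; exact: NS.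
- move=> T' cT; rewrite wS wt_x (bigID (fun w => val w \in T')) /= addrC lerD2r.
  case: ifP => vT.
    have := yI [set w | val w \notin T'].
    rewrite /wt (eq_bigl (fun w => val w \notin T')); last by move=> w; rewrite inE.
    apply; apply/forallP => a; apply/implyP; rewrite inE => aT.
    apply/forallP => b; apply/implyP; rewrite inE => bT.
    apply/negP => eab; have := cover_edge cT eab; by rewrite (negbTE aT) (negbTE bT).
  rewrite big1 // => w wT; have := cover_edge cT (valP w).
  by rewrite vT (negbTE wT).
Qed.

Lemma nbhd_irr : irreflexive (nbhd_rel e v).
Proof. by move=> w; rewrite /nbhd_rel eirr. Qed.

End Main.


End Helpers.
Import Helpers.

Theorem mainTheorem5 (R : realFieldType) (V : finType) (e : rel V) (v : V) :
  simple_graph e -> no_isolated e ->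
  exists r : R, is_nu e (unit_cost R v) r /\ is_fclique_number (nbhd_rel e v) r.
Proof.
move=> sg _.
have [r hr] := @fclique_exists R (nbhd_type e v) (nbhd_rel e v) (@nbhd_irr _ _ v sg).
exists r; split => //; split.
  case: hr => [[y [fy <-]] _].
  have [x [fx wx]] := nu_lower sg fy.
  by exists x.
move=> x fx; have [fy ->] := nu_upper sg fx.
by case: hr => _; apply.
Qed.
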